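(* Let $G$ be a finite graph with $n$ vertices and $t$ a positive integer with prime factorization $t=\prod_{i=1}^s p_i^{r_i}$. Write $Z_t\times Z_2=\{(\rho^i,\sigma^j): 0\le i\le t-1,\ j\in\{0,1\}\}$ (with $\rho$ of order $t$, $\sigma$ of order 2) and $D_t\times Z_2=\{(\rho^i,\sigma^j),(\tau\rho^i,\sigma^j): 0\le i\le t-1,\ j\in\{0,1\}\}$ (with $\rho,\tau$ the rotation and reflection generating $D_t$), and when $\mathrm{Aut}(G)$ is isomorphic to one of these groups denote by $\pi_g$ the automorphism corresponding to the group element $g$. Let $P_0^*=\{\pi_{(\rho^0,\sigma)}\}$ if $t$ is odd and $P_0^*=\{\pi_{(\rho^0,\sigma)},\pi_{(\rho^{t/2},\sigma)}\}$ if $t$ is even, and let $P^*=P_0^*\cup\{\pi_{(\rho^{t/p_i},\sigma^0)}: i=1,\dots,s\}$. Then for every positive integer $k$: (i) if $\mathrm{Aut}(G)\cong Z_t\times Z_2$, then $L(G,k)=\sum_{P\subseteq P^*}(-1)^{|P|}N_{\ge}(P)$; (ii) if $\mathrm{Aut}(G)\cong D_t\times Z_2$, then for $b\in\{0,1\}$ and $0\le i\le t-1$, $$N_=(\{\pi_{(\rho^0,\sigma^0)},\pi_{(\tau\rho^i,\sigma^b)}\})=\sum_{\{\pi_{(\tau\rho^i,\sigma^b)}\}\subseteq P\subseteq\{\pi_{(\tau\rho^i,\sigma^b)}\}\cup P^*}(-1)^{|P|-1}N_{\ge}(P),$$ and $$L(G,k)=\sum_{P\subseteq P^*}(-1)^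{|P|}N_{\ge}(P)-\sum_{b=0}^{1}\sum_{i=0}^{t-1}N_=(\{\pi_{(\rho^0,\sigma^0)},\pi_{(\tau\rho^i,\sigma^b)}\}).$$
   Context: A $k$-labeling of $G$ is a map $\phi:V(G)\to\{1,\dots,k\}$; an automorphism $\pi$ preserves $\phi$ if $\phi(\pi(v))=\phi(v)$ for all $v$; $\phi$ is distinguishing if only the identity preserves it; $L(G,k)$ is the number of distinguishing $k$-labelings. For $P\subseteq\mathrm{Aut}(G)$, $N_{\ge}(P)$ is the number of $k$-labelings preserved by every automorphism in $P$ (so $N_{\ge}(\emptyset)=k^n$), and $N_=(P)$ is the number of $k$-labelings whose set of preserving automorphisms is exactly $P$. *)

(* Defs.v *)
From mathcomp Require Import all_boot all_order all_algebra all_fingroup.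
Set Implicit Arguments. Unset Strict Implicit. Unset Printing Implicit Defensive.
Import GRing.Theory.

Section Defs.
Variable V : finType.

Definition Aut (e : rel V) : {set {perm V}} :=
  [set p : {perm V} | [forall x, forall y, e (p x) (p y) == e x y]].

(* k-labelings are maps V -> 'I_k (labels 1..k shifted to 0..k-1). *)
Definition preserves (k : nat) (p : {perm V}) (phi : {ffun V -> 'I_k}) : bool :=
  [forall v, phi (p v) == phi v].

Definition stab (e : rel V) (k : nat) (phi : {ffun V -> 'I_k}) : {set {perm V}} :=
  [set p in Aut e | preserves p phi].

Definition distinguishing (e : rel V) (k : nat) (phi : {ffun V -> 'I_k}) : bool :=
  stab e phi == [set 1%g].

Definition Ldist (e : rel V) (k : nat) : nat :=
  #|[set phi : {ffun V -> 'I_k} | distinguishing e phi]|.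

Definition Nge (k : nat) (P : {set {perm V}}) : nat :=
  #|[set phi : {ffun V -> 'I_k} | [forall p in P, preserves p phi]]|.

Definition Neq (e : rel V) (k : nat) (P : {set {perm V}}) : nat :=
  #|[set phi : {ffun V -> 'I_k} | stab e phi == P]|.

(* Aut(G) ~ Z_t x Z_2 via rho |-> r, sigma |-> s: the defining relations hold
   and (i,j) |-> r^i s^j is a bijection from Z_t x Z_2 onto Aut(G). *)
Definition ZtZ2_iso (e : rel V) (t : nat) (r s : {perm V}) : Prop :=
  [/\ (r ^+ t = 1)%g, (s ^+ 2 = 1)%g, commute r s,
      Aut e = [set (r ^+ i * s ^+ j)%g | i : 'I_t, j : 'I_2]
    & #|Aut e| = (t * 2)%N].

(* Aut(G) ~ D_t x Z_2 via rho |-> r, tau |-> u, sigma |-> s. *)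
Definition DtZ2_iso (e : rel V) (t : nat) (r u s : {perm V}) : Prop :=
  [/\ (r ^+ t = 1)%g, (u ^+ 2 = 1)%g, (s ^+ 2 = 1)%g, (u * r * u = r^-1)%g
    & commute r s] /\ commute u s /\
      Aut e = [set (u ^+ c.1 * (r ^+ c.2.1 * s ^+ c.2.2))%g | c : 'I_2 * ('I_t * 'I_2)] /\
  #|Aut e| = (2 * t * 2)%N.

Definition P0star (t : nat) (r s : {perm V}) : {set {perm V}} :=
  if odd t then [set s] else [set s; (r ^+ (t %/ 2) * s)%g].

Definition Pstar (t : nat) (r s : {perm V}) : {set {perm V}} :=
  P0star t r s :|: [set:: [seq (r ^+ (t %/ p))%g | p <- primes t]].

End Defs.

(* Main.v *)
Require Import Defs.
From mathcomp Require Import all_boot all_order all_algebra all_fingroup zify.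
Import GRing.Theory Num.Theory.
Set Implicit Arguments. Unset Strict Implicit.
Local Open Scope ring_scope.

Lemma alt_powerset (T : finType) (A : {set T}) :
  \sum_(P in powerset A) (-1) ^+ #|P| = ((A == set0) : nat)%:Z :> int.
Proof.
have [->|[x xA]] := set_0Vmem A.
  by rewrite powerset0 big_set1 cards0 eqxx.
have /negbTE-> : A != set0 by apply/set0Pn; exists x.
pose g (P : {set T}) := if x \in P then P :\ x else x |: P.
have gK : involutive g.
  move=> P; rewrite /g; case: (boolP (x \in P)) => xP.
    by rewrite setD11 setD1K.
  by rewrite setU11 setU1K.
have gA P : (g P \in powerset A) = (P \in powerset A).
  rewrite !powersetE /g; case: ifP => xP.
    apply/idP/idP => H; last by apply: subset_trans H; apply: subsetDl.
    by rewrite -(setD1K xP) subUset sub1set xA.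
  by rewrite subUset sub1set xA.
have gS P : (-1) ^+ #|g P| = - (-1) ^+ #|P| :> int.
  rewrite /g; case: ifP => xP.
    by rewrite [in RHS](cardsD1 x P) xP exprS mulN1r opprK.
  by rewrite cardsU1 xP exprS mulN1r.
set S := \sum_(P in _) _.
have : S = - S.
  rewrite {1}/S (reindex_inj (inv_inj gK)) /=.
  rewrite /S -sumrN; apply: eq_big => P; first by rewrite gA.
  by move=> _; rewrite gS.
move/eqP; rewrite -subr_eq0 opprK -mulr2n mulrn_eq0 /= => /eqP ->.
done.
Qed.

Lemma incl_excl (T : finType) (A R : {set T}) :
  \sum_(P in powerset A) (-1) ^+ #|P| * ((P \subset R) : nat)%:Z
    = ((A :&: R == set0) : nat)%:Z :> int.
Proof.
rewrite -alt_powerset.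
transitivity (\sum_(P in powerset A | P \subset R) (-1) ^+ #|P| : int).
  rewrite big_mkcondr /=; apply: eq_bigr => P _.
  by case: (P \subset R); rewrite ?mulr1 ?mulr0.
apply: eq_bigl => P; by rewrite !powersetE subsetI.
Qed.

Lemma incl_excl1 (T : finType) (S R : {set T}) (x : T) : x \notin S ->
  \sum_(P in powerset (x |: S) | x \in P)
      (-1) ^+ (#|P| - 1)%N * ((P \subset R) : nat)%:Z
    = (((x \in R) && (S :&: R == set0)) : nat)%:Z :> int.
Proof.
move=> xS.
have H := @incl_excl _ (x |: S) R.
rewrite (bigID (fun P : {set T} => x \in P)) /= in H.
have E2 : \sum_(P in powerset (x |: S) | x \notin P)
      (-1) ^+ #|P| * ((P \subset R) : nat)%:Z
   = \sum_(P in powerset S) (-1) ^+ #|P| * ((P \subset R) : nat)%:Z :> int.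
  apply: eq_bigl => P; rewrite !powersetE.
  apply/andP/idP => [[sP xP]|sP].
    apply/subsetP => y yP; move/subsetP: sP => /(_ y yP).
    by rewrite !inE => /orP [/eqP Ey|//]; rewrite -Ey yP in xP.
  split; first by apply: subset_trans sP (subsetUr _ _).
  by apply/negP => /(subsetP sP); rewrite (negbTE xS).
rewrite E2 incl_excl in H.
have E1 : \sum_(P in powerset (x |: S) | x \in P)
      (-1) ^+ (#|P| - 1)%N * ((P \subset R) : nat)%:Z
  = - \sum_(P in powerset (x |: S) | x \in P)
      (-1) ^+ #|P| * ((P \subset R) : nat)%:Z :> int.
  rewrite -sumrN; apply: eq_bigr => P /andP [_ xP].
  have : (0 < #|P|)%N by apply/card_gt0P; exists x.
  case: #|P| => // n _; rewrite subn1 /= exprS mulN1r mulNr opprK //.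
rewrite E1.
have -> : \sum_(P in powerset (x |: S) | x \in P)
      (-1) ^+ #|P| * ((P \subset R) : nat)%:Z
   = (((x |: S) :&: R == set0) : nat)%:Z - ((S :&: R == set0) : nat)%:Z :> int.
  by rewrite -H addrK.
rewrite opprB.
case: (boolP (x \in R)) => xR /=.
  have /negbTE -> : (x |: S) :&: R != set0.
    by apply/set0Pn; exists x; rewrite !inE eqxx xR.
  by rewrite subr0.
have -> : (x |: S) :&: R = S :&: R.
  apply/setP => y; rewrite !inE; case: (boolP (y == x)) => // /eqP ->.
  by rewrite (negbTE xR) (negbTE xS).
by rewrite subrr.
Qed.
Local Close Scope ring_scope.
Local Open Scope group_scope.

Section Pres.
Variables (V : finType) (k : nat) (phi : {ffun V -> 'I_k}).

Lemma pres1 : preserves 1 phi.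
Proof. by apply/forallP => v; rewrite perm1. Qed.

Lemma presM p q : preserves p phi -> preserves q phi -> preserves (p * q) phi.
Proof.
move=> /forallP Hp /forallP Hq; apply/forallP => v.
by rewrite permM (eqP (Hq _)) (eqP (Hp _)).
Qed.

Lemma presX p n : preserves p phi -> preserves (p ^+ n) phi.
Proof.
move=> Hp; elim: n => [|n IH]; first by rewrite expg0 pres1.
by rewrite expgS presM.
Qed.

Lemma presV p : preserves p phi -> preserves p^-1 phi.
Proof.
move=> /forallP Hp; apply/forallP => v.
by rewrite -{2}(permKV p v) (eqP (Hp _)).
Qed.

Lemma presXV p q : preserves (p * q^-1) phi -> preserves q phi -> preserves p phi.
Proof.
move=> H1 H2; have := presM H1 H2; by rewrite -mulgA mulVg mulg1.
Qed.
End Pres.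

Section Key.
Variables (V : finType) (t : nat) (r s : {perm V}).
Hypotheses (t0 : (0 < t)%N) (rt : r ^+ t = 1) (s2 : s ^+ 2 = 1) (crs : commute r s)
  (ord : forall n, r ^+ n = 1 -> (t %| n)%N).

Lemma Pstar_s : s \in Pstar t r s.
Proof. by rewrite /Pstar /P0star !inE; case: odd; rewrite !inE eqxx. Qed.

Lemma Pstar_rs : ~~ odd t -> r ^+ (t %/ 2) * s \in Pstar t r s.
Proof. by rewrite /Pstar /P0star => /negbTE ->; rewrite !inE eqxx orbT. Qed.

Lemma Pstar_r p : p \in primes t -> r ^+ (t %/ p) \in Pstar t r s.
Proof.
move=> pt; rewrite /Pstar inE; apply/orP; right.
by rewrite inE; apply: map_f.
Qed.

Lemma keyr (k : nat) (phi : {ffun V -> 'I_k}) i :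
  r ^+ i != 1 -> preserves (r ^+ i) phi -> exists2 p, p \in Pstar t r s & preserves p phi.
Proof.
rewrite -(expg_mod _ rt) => ri pi.
set j := (i %% t)%N in ri pi.
have jt : (j < t)%N by rewrite ltn_pmod.
have j0 : (0 < j)%N by rewrite lt0n; apply: contraNneq ri => ->.
have [a _ ha] := Bezoutl j t0.
set g := gcdn t j in ha.
have gt : (g %| t)%N by apply: dvdn_gcdl.
have g0 : (0 < g)%N by rewrite gcdn_gt0 t0.
have glt : (g < t)%N by apply: leq_ltn_trans jt; apply: dvdn_leq => //; apply: dvdn_gcdr.
set m := (t %/ g)%N.
have tm : t = (m * g)%N by rewrite divnK.
have m1 : (1 < m)%N.
  rewrite ltnNge; apply/negP => m1.
  have : (m * g <= 1 * g)%N by rewrite leq_mul2r m1 orbT.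
  by rewrite -tm mul1n => tg; rewrite ltnNge tg in glt.
set p := pdiv m.
have pp : prime p := pdiv_prime m1.
have pm : (p %| m)%N := pdiv_dvd m.
have pt : p \in primes t.
  by rewrite mem_primes pp t0 /= tm; apply: dvdn_mulr.
exists (r ^+ (t %/ p)); first exact: Pstar_r.
have [q mq] : exists q, m = (q * p)%N by exists (m %/ p); rewrite divnK.
have -> : (t %/ p = g * q)%N.
  by rewrite tm mq mulnAC mulnK ?prime_gt0 // mulnC.
rewrite expgM; apply: presX.
have E : r ^+ g * r ^+ (a * j) = 1.
  rewrite -expgD; move: ha => /dvdnP [c ->].
  by rewrite mulnC expgM rt expg1n.
have -> : r ^+ g = (r ^+ (a * j))^-1.
  by rewrite -(mulgK (r ^+ (a * j)) (r ^+ g)) E mul1g.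
by apply: presV; rewrite mulnC expgM; apply: presX.
Qed.

Lemma key (k : nat) (phi : {ffun V -> 'I_k}) i j : (j < 2)%N ->
  r ^+ i * s ^+ j != 1 -> preserves (r ^+ i * s ^+ j) phi ->
  exists2 p, p \in Pstar t r s & preserves p phi.
Proof.
case: j => [|[|]] // _.
  by rewrite expg0 mulg1; apply: keyr.
rewrite expg1 -(expg_mod _ rt) => x1 px.
set i' := (i %% t)%N in x1 px.
have it : (i' < t)%N by rewrite ltn_pmod.
have csr : commute s (r ^+ i') by apply: commuteX; apply: commute_sym.
have xx : (r ^+ i' * s) ^+ 2 = r ^+ (i' + i').
  by rewrite expgMn ?s2 ?mulg1 -?expgM ?addnn ?muln2 //; apply: commute_sym.
have pxx : preserves (r ^+ (i' + i')) phi by rewrite -xx presX.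
have [r2|/negPn/eqP r2] := boolP (r ^+ (i' + i') != 1); first exact: keyr r2 pxx.
have td := ord r2.
have [i0|i0] := boolP (i' == 0%N).
  by exists s; [exact: Pstar_s | move: px; rewrite (eqP i0) expg0 mul1g].
have ti : t = (i' + i')%N.
  move/dvdnP: td => [c hc].
  have c1 : c = 1%N.
    have : (c * t < 2 * t)%N by rewrite -hc; lia.
    have : (0 < c * t)%N by rewrite -hc; lia.
    rewrite ltn_mul2r t0 /=; case: c {hc} => [|[|]] //.
  by rewrite hc c1 mul1n.
exists (r ^+ (t %/ 2) * s) => //.
  by apply: Pstar_rs; rewrite ti addnn odd_double.
by have -> : (t %/ 2 = i')%N by rewrite ti addnn divn2 half_double.
Qed.
End Key.

Section Zpart.
Variables (V : finType) (t : nat) (r s : {perm V}).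
Hypotheses (t0 : (0 < t)%N) (rt : r ^+ t = 1) (s2 : s ^+ 2 = 1) (crs : commute r s)
  (injrs : forall (i i' : 'I_t) (j j' : 'I_2),
      r ^+ i * s ^+ j = r ^+ i' * s ^+ j' -> i = i' /\ j = j').

Lemma ordr n : r ^+ n = 1 -> (t %| n)%N.
Proof.
move=> rn.
have := @injrs (Ordinal (ltn_pmod n t0)) (Ordinal t0) ord0 ord0.
rewrite /= !expg0 !mulg1 expg_mod // => /(_ rn) [/(congr1 val) /= h _].
by rewrite /dvdn h.
Qed.

Lemma Pstar_form p : p \in Pstar t r s ->
  exists i : 'I_t, exists j : 'I_2, p = r ^+ i * s ^+ j /\ (0 < i + j)%N.
Proof.
rewrite /Pstar /P0star inE => /orP [].
  case: ifP => _; rewrite !inE; [|case/orP]; move/eqP => ->.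
  - by exists (Ordinal t0), (Ordinal (isT : (1 < 2)%N)); rewrite expg0 mul1g expg1.
  - by exists (Ordinal t0), (Ordinal (isT : (1 < 2)%N)); rewrite expg0 mul1g expg1.
  have h : (t %/ 2 < t)%N by rewrite ltn_Pdiv.
  by exists (Ordinal h), (Ordinal (isT : (1 < 2)%N)); rewrite expg1 addn1.
rewrite inE => /mapP [q qt ->].
move: qt; rewrite mem_primes => /and3P [qp _ qd].
have h : (t %/ q < t)%N by rewrite ltn_Pdiv // prime_gt1.
exists (Ordinal h), (Ordinal (isT : (0 < 2)%N)); rewrite expg0 mulg1; split => //=.
by rewrite addn0 divn_gt0 ?prime_gt0 // dvdn_leq.
Qed.

Lemma notin1 : 1 \notin Pstar t r s.
Proof.
apply/negP => /Pstar_form [i [j [E h]]].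
have := @injrs i (Ordinal t0) j ord0; rewrite /= !expg0 mulg1 -E => /(_ erefl) [Ei Ej].
by rewrite Ei Ej in h.
Qed.
End Zpart.

Local Open Scope ring_scope.

Lemma cardZ (T : finType) (b : pred T) :
  (#|[set x | b x]|)%:Z = \sum_x ((b x : nat))%:Z.
Proof.
rewrite -sum1_card (big_morph Posz PoszD (erefl _)) big_mkcond /=.
by apply: eq_bigr => x _; rewrite inE; case: (b x).
Qed.

Section Sums.
Variables (V : finType) (k : nat).
Definition Rs (phi : {ffun V -> 'I_k}) := [set p : {perm V} | preserves p phi].

Lemma NgeE (P : {set {perm V}}) : (Nge k P)%:Z = \sum_(phi : {ffun V -> 'I_k}) ((P \subset Rs phi : nat))%:Z.
Proof.
rewrite /Nge cardZ; apply: eq_bigr => phi _.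
congr (Posz (nat_of_bool _)).
by apply/forall_inP/subsetP => H p /H; rewrite inE.
Qed.

Lemma sumNge (S : {set {perm V}}) : \sum_(P in powerset S) (-1) ^+ #|P| * (Nge k P)%:Z
   = \sum_(phi : {ffun V -> 'I_k}) (((S :&: Rs phi == set0) : nat))%:Z.
Proof.
under eq_bigr do rewrite NgeE mulr_sumr.
rewrite exchange_big /=; apply: eq_bigr => phi _.
by rewrite incl_excl.
Qed.

Lemma sumNge1 (x : {perm V}) (S : {set {perm V}}) : x \notin S ->
  \sum_(P in powerset (x |: S) | x \in P) (-1) ^+ (#|P| - 1)%N * (Nge k P)%:Z
   = \sum_(phi : {ffun V -> 'I_k}) ((((x \in Rs phi) && (S :&: Rs phi == set0)) : nat))%:Z.
Proof.
move=> xS.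
under eq_bigr do rewrite NgeE mulr_sumr.
rewrite exchange_big /=; apply: eq_bigr => phi _.
by rewrite incl_excl1.
Qed.

Lemma LdistE (e : rel V) : (Ldist e k)%:Z = \sum_(phi : {ffun V -> 'I_k}) ((distinguishing e phi : nat))%:Z.
Proof. by rewrite /Ldist cardZ. Qed.

Lemma NeqE (e : rel V) (X : {set {perm V}}) : (Neq e k X)%:Z = \sum_(phi : {ffun V -> 'I_k}) (((stab e phi == X) : nat))%:Z.
Proof. by rewrite /Neq cardZ. Qed.
End Sums.

Local Close Scope ring_scope.

Lemma Aut1 (V : finType) (e : rel V) : (1 : {perm V}) \in Defs.Aut e.
Proof. by rewrite inE; apply/forallP => x; apply/forallP => y; rewrite !perm1. Qed.

Lemma stabE (V : finType) (e : rel V) k (phi : {ffun V -> 'I_k}) p :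
  (p \in stab e phi) = (p \in Defs.Aut e) && preserves p phi.
Proof. by rewrite inE. Qed.

Lemma Pstar_nopres (V : finType) t (r s : {perm V}) k (phi : {ffun V -> 'I_k}) p :
  Pstar t r s :&: Rs phi == set0 -> p \in Pstar t r s -> preserves p phi -> False.
Proof.
move=> /eqP C pP pr.
by have := in_set0 p; rewrite -C in_setI pP /Rs inE pr.
Qed.

Section Zmain.
Variables (V : finType) (e : rel V) (t : nat) (r s : {perm V}).
Hypotheses (t0 : (0 < t)%N) (rt : r ^+ t = 1) (s2 : s ^+ 2 = 1) (crs : commute r s)
  (injrs : forall (i i' : 'I_t) (j j' : 'I_2),
      r ^+ i * s ^+ j = r ^+ i' * s ^+ j' -> i = i' /\ j = j')
  (hsub : forall (i : 'I_t) (j : 'I_2), r ^+ i * s ^+ j \in Defs.Aut e).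

Lemma Pstar_Aut p : p \in Pstar t r s -> p \in Defs.Aut e.
Proof. by move/(Pstar_form t0) => [i [j [-> _]]]. Qed.

Lemma dist_imp k (phi : {ffun V -> 'I_k}) :
  distinguishing e phi -> Pstar t r s :&: Rs phi == set0.
Proof.
move=> /eqP hst; apply/eqP/setP => p; rewrite in_set0.
apply/negP => /setIP [pP]; rewrite inE => pr.
have : p \in stab e phi by rewrite stabE (Pstar_Aut pP) pr.
rewrite hst inE => /eqP p1.
by move: pP; rewrite p1 (negbTE (notin1 t0 injrs)).
Qed.

Lemma stab_rs k (phi : {ffun V -> 'I_k}) (i j : nat) :
  Pstar t r s :&: Rs phi == set0 -> (j < 2)%N -> preserves (r ^+ i * s ^+ j) phi ->
  r ^+ i * s ^+ j = 1.
Proof.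
move=> C j2 pr; apply/eqP/negPn/negP => ne.
have [q qP qpr] := key t0 rt s2 crs (ordr t0 rt injrs) j2 ne pr.
exact: Pstar_nopres C qP qpr.
Qed.

Lemma distZ k (phi : {ffun V -> 'I_k}) :
  (forall p, p \in Defs.Aut e -> exists (i : 'I_t) (j : 'I_2), p = r ^+ i * s ^+ j) ->
  distinguishing e phi = (Pstar t r s :&: Rs phi == set0).
Proof.
move=> hAut; apply/idP/idP; first exact: dist_imp.
move=> C; apply/eqP/setP => p; rewrite stabE in_set1.
apply/andP/eqP => [[pA pr]|->]; last by rewrite Aut1 pres1.
have [i [j E]] := hAut p pA; rewrite E in pr *.
exact: stab_rs C (ltn_ord j) pr.
Qed.
End Zmain.
Lemma inj_of_card (T U : finType) (f : T -> U) :
  #|[set f c | c : T]| = #|T| -> injective f.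
Proof.
move=> h; have /imset_injP H : #|[set f c | c : T]| == #|T| by rewrite h.
by move=> x y; apply: H.
Qed.

Lemma imset2_pairE (V : finType) (t : nat) (r s : {perm V}) :
  [set (r ^+ i * s ^+ j)%g | i : 'I_t, j : 'I_2] =
  [set (r ^+ c.1 * s ^+ c.2)%g | c : 'I_t * 'I_2].
Proof.
apply/setP => p; apply/imset2P/imsetP => [[i j _ _ ->]|[[i j] _ ->]].
  by exists (i, j).
by exists i j.
Qed.

Section Dpart.
Variables (V : finType) (e : rel V) (t : nat) (r u s : {perm V}).
Definition fD (c : 'I_2 * ('I_t * 'I_2)) := u ^+ c.1 * (r ^+ c.2.1 * s ^+ c.2.2).
Hypotheses (t0 : (0 < t)%N) (rt : r ^+ t = 1) (u2 : u ^+ 2 = 1) (s2 : s ^+ 2 = 1)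
  (uru : u * r * u = r^-1) (crs : commute r s) (cus : commute u s)
  (injD : injective fD) (hsubD : forall c, fD c \in Defs.Aut e)
  (hAutD : forall p, p \in Defs.Aut e -> exists c, p = fD c).

Definition xD (b : 'I_2) (i : 'I_t) := u * r ^+ i * s ^+ b.

Let one2 : 'I_2 := Ordinal (isT : (1 < 2)%N).

Lemma xfD b i : xD b i = fD (one2, (i, b)).
Proof. by rewrite /xD /fD /= expg1 mulgA. Qed.

Lemma injrsD (i i' : 'I_t) (j j' : 'I_2) :
  r ^+ i * s ^+ j = r ^+ i' * s ^+ j' -> i = i' /\ j = j'.
Proof.
move=> E; have := @injD (ord0, (i, j)) (ord0, (i', j')).
by rewrite /fD /= !expg0 !mul1g => /(_ E) [-> ->].
Qed.

Lemma hsubrs (i : 'I_t) (j : 'I_2) : r ^+ i * s ^+ j \in Defs.Aut e.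
Proof. by have := hsubD (ord0, (i, j)); rewrite /fD /= expg0 mul1g. Qed.

Lemma xD_Aut b i : xD b i \in Defs.Aut e.
Proof. by rewrite xfD. Qed.

Lemma xD_notPstar b i : xD b i \notin Pstar t r s.
Proof.
apply/negP => /(Pstar_form t0) [i' [j' [E _]]].
have := @injD (ord0, (i', j')) (one2, (i, b)).
by rewrite -xfD /fD /= expg0 mul1g -E => /(_ erefl) [].
Qed.

Lemma xD_neq1 b i : xD b i != 1.
Proof.
apply/eqP => E; have := @injD (ord0, (Ordinal t0, ord0)) (one2, (i, b)).
by rewrite -xfD /fD /= !expg0 !mulg1 E => /(_ erefl) [].
Qed.

Lemma xD_inj b i b' i' : xD b i = xD b' i' -> b = b' /\ i = i'.
Proof. by rewrite !xfD => /injD [-> ->]. Qed.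

Lemma uV : u^-1 = u.
Proof. by apply/eqP; rewrite eq_invg_mul -{2}[u]expg1 -expgS u2. Qed.

Lemma rV : r^-1 = r ^+ t.-1.
Proof. by apply/eqP; rewrite eq_invg_mul -expgS prednK // rt. Qed.

Lemma uri (i : nat) : u * r ^+ i * u = r ^+ (t.-1 * i).
Proof.
have -> : u * r ^+ i * u = (r ^+ i) ^ u by rewrite /conjg uV mulgA.
rewrite conjXg expgM; congr (_ ^+ _).
by rewrite /conjg uV mulgA uru rV.
Qed.

Lemma xDM b i c j : xD b i * xD c j = r ^+ (t.-1 * i + j) * s ^+ (b + c).
Proof.
have cs : commute (s ^+ b) (u * r ^+ j).
  apply: commuteM; first by apply: commute_sym; apply: commuteX.
  by apply: commute_sym; apply: commuteX2.
rewrite /xD.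
transitivity (u * r ^+ i * (s ^+ b * (u * r ^+ j)) * s ^+ c); first by rewrite !mulgA.
rewrite cs.
transitivity ((u * r ^+ i * u) * r ^+ j * (s ^+ b * s ^+ c)); first by rewrite !mulgA.
by rewrite uri -!expgD.
Qed.

Lemma xD2 b i : xD b i * xD b i = 1.
Proof.
rewrite xDM -mulSnr prednK // expgM rt expg1n mul1g.
by rewrite addnn -muln2 mulnC expgM s2 expg1n.
Qed.
Lemma stab_cases k (phi : {ffun V -> 'I_k}) p :
  Pstar t r s :&: Rs phi == set0 -> p \in Defs.Aut e -> preserves p phi ->
  p = 1 \/ exists b i, p = xD b i.
Proof.
move=> C /hAutD [[c1 [i j]] ->]; case: c1 => [[|[|]]] //= lt.
  rewrite /fD /= expg0 mul1g => pr; left.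
  exact: (stab_rs t0 rt s2 crs injrsD C (ltn_ord j) pr).
move=> _; right; exists j, i; rewrite xfD; congr fD; congr (_, _); exact: val_inj.
Qed.

Lemma xD_unique k (phi : {ffun V -> 'I_k}) b i b' i' :
  Pstar t r s :&: Rs phi == set0 -> preserves (xD b i) phi -> preserves (xD b' i') phi ->
  xD b i = xD b' i'.
Proof.
move=> C p1 p2.
have := presM p1 p2; rewrite xDM -(expg_mod _ s2) => pr.
have E := stab_rs t0 rt s2 crs injrsD C (ltn_pmod _ (isT : (0 < 2)%N)) pr.
rewrite (expg_mod _ s2) -xDM in E.
by apply: (@mulgI _ (xD b i)); rewrite E xD2.
Qed.

Lemma Da k (phi : {ffun V -> 'I_k}) b i :
  (stab e phi == [set 1; xD b i]) = (xD b i \in Rs phi) && (Pstar t r s :&: Rs phi == set0).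
Proof.
apply/idP/idP.
  move/eqP => hst.
  have : xD b i \in stab e phi by rewrite hst !inE eqxx orbT.
  rewrite stabE => /andP [_ pr]; rewrite inE pr /=.
  apply/eqP/setP => p; rewrite in_set0; apply/negP => /setIP [pP]; rewrite inE => pp.
  have : p \in stab e phi by rewrite stabE (Pstar_Aut t0 hsubrs pP) pp.
  rewrite hst !inE => /orP [] /eqP E.
    by move: pP; rewrite E (negbTE (notin1 t0 injrsD)).
  by move: pP; rewrite E (negbTE (xD_notPstar _ _)).
move=> /andP []; rewrite inE => pr C.
apply/eqP/setP => p; rewrite stabE in_set2.
apply/andP/orP => [[pA pp]|].
  case: (stab_cases C pA pp) => [->|[b' [i' E]]]; first by left.
  right; apply/eqP; rewrite E; apply/esym/(xD_unique C pr); by rewrite -E.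
case => /eqP ->; first by rewrite Aut1 pres1.
by rewrite xD_Aut pr.
Qed.

Lemma dist_noX k (phi : {ffun V -> 'I_k}) :
  Pstar t r s :&: Rs phi == set0 ->
  distinguishing e phi = ~~ [exists b, exists i, xD b i \in Rs phi].
Proof.
move=> C; apply/idP/idP.
  move/eqP => hst; apply/negP => /existsP [b /existsP [i]]; rewrite inE => pr.
  have : xD b i \in stab e phi by rewrite stabE xD_Aut pr.
  by rewrite hst inE (negbTE (xD_neq1 _ _)).
move=> /negP nX; apply/eqP/setP => p; rewrite stabE in_set1.
apply/andP/eqP => [[pA pp]|->]; last by rewrite Aut1 pres1.
case: (stab_cases C pA pp) => [//|[b [i E]]].
by exfalso; apply: nX; apply/existsP; exists b; apply/existsP; exists i; rewrite inE -E.
Qed.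

Local Open Scope ring_scope.

Lemma Db k (phi : {ffun V -> 'I_k}) :
  (((Pstar t r s :&: Rs phi == set0) : nat))%:Z
  = ((distinguishing e phi : nat))%:Z
    + \sum_(b < 2) \sum_(i < t) (((stab e phi == [set 1%g; xD b i]) : nat))%:Z.
Proof.
under eq_bigr do under eq_bigr do rewrite Da.
have [C|nC] := boolP (Pstar t r s :&: Rs phi == set0); last first.
  rewrite big1 ?addr0; last by move=> b _; rewrite big1 // => i _; rewrite andbF.
  have -> // : distinguishing e phi = false.
  by apply/negP => /(dist_imp t0 injrsD hsubrs); rewrite (negbTE nC).
rewrite (dist_noX C).
have [/existsP [b0 /existsP [i0 X0]]|nX] := boolP [exists b, exists i, xD b i \in Rs phi];
  last first.
  rewrite big1 ?addr0 // => b _; rewrite big1 // => i _; rewrite andbT.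
  case: (boolP (xD b i \in Rs phi)) => // X; case/negP: nX.
  by apply/existsP; exists b; apply/existsP; exists i.
rewrite /= add0r (bigD1 b0) //= (bigD1 i0) //= X0 /=.
rewrite big1 ?addr0; last first.
  move=> i ni; rewrite andbT; case: (boolP (xD b0 i \in Rs phi)) => // X.
  move: X X0; rewrite !inE => X X0.
  by have [_ /eqP] := xD_inj (xD_unique C X X0); rewrite (negbTE ni).
rewrite big1 ?addr0 // => b nb; rewrite big1 // => i _; rewrite andbT.
case: (boolP (xD b i \in Rs phi)) => // X.
move: X X0; rewrite !inE => X X0.
by have [/eqP] := xD_inj (xD_unique C X X0); rewrite (negbTE nb).
Qed.
End Dpart.


Local Open Scope ring_scope.

Theorem theorem4 (V : finType) (e : rel V) (t : nat) :
  symmetric e -> irreflexive e -> (0 < t)%N ->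
  (forall (r s : {perm V}) (k : nat), (0 < k)%N -> ZtZ2_iso e t r s ->
     (Ldist e k)%:Z =
       \sum_(P in powerset (Pstar t r s)) (-1) ^+ #|P| * (Nge k P)%:Z)
  /\
  (forall (r u s : {perm V}) (k : nat), (0 < k)%N -> DtZ2_iso e t r u s ->
     (forall (b : 'I_2) (i : 'I_t),
        (Neq e k [set 1%g; (u * r ^+ i * s ^+ b)%g])%:Z =
          \sum_(P in powerset ((u * r ^+ i * s ^+ b)%g |: Pstar t r s)
                 | (u * r ^+ i * s ^+ b)%g \in P)
             (-1) ^+ (#|P| - 1)%N * (Nge k P)%:Z)
     /\
     (Ldist e k)%:Z =
       \sum_(P in powerset (Pstar t r s)) (-1) ^+ #|P| * (Nge k P)%:Z
       - \sum_(b < 2) \sum_(i < t)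
           (Neq e k [set 1%g; (u * r ^+ i * s ^+ b)%g])%:Z).
Proof.
move=> _ _ t0; split.
  move=> r s k _ [rt s2 crs hA hc].
  have injf : injective (fun c : 'I_t * 'I_2 => (r ^+ c.1 * s ^+ c.2)%g).
    apply: inj_of_card; rewrite -imset2_pairE -hA hc card_prod !card_ord //.
  have injrs (i i' : 'I_t) (j j' : 'I_2) :
      (r ^+ i * s ^+ j = r ^+ i' * s ^+ j')%g -> i = i' /\ j = j'.
    by move=> E; have [-> ->] := injf (i, j) (i', j') E.
  have hsub (i : 'I_t) (j : 'I_2) : (r ^+ i * s ^+ j)%g \in Defs.Aut e.
    by rewrite hA; apply/imset2P; exists i j.
  have hAut p : p \in Defs.Aut e -> exists (i : 'I_t) (j : 'I_2), p = (r ^+ i * s ^+ j)%g.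
    by rewrite hA => /imset2P [i j _ _ ->]; exists i, j.
  rewrite LdistE sumNge; apply: eq_bigr => phi _.
  by rewrite (distZ t0 rt s2 crs injrs hsub phi hAut).
move=> r u s k _ [[rt u2 s2 uru crs] [cus [hA hc]]].
have injD : injective (@fD V t r u s).
  apply: inj_of_card; rewrite -hA hc card_prod card_prod !card_ord mulnA //.
have hsubD c : @fD V t r u s c \in Defs.Aut e by rewrite hA; apply/imsetP; exists c.
have hAutD p : p \in Defs.Aut e -> exists c, p = @fD V t r u s c.
  by rewrite hA => /imsetP [c _ ->]; exists c.
split.
  move=> b i.
  rewrite NeqE (sumNge1 k (xD_notPstar t0 injD b i)); apply: eq_bigr => phi _.
  by have := Da t0 rt u2 s2 uru crs cus injD hsubD hAutD phi b i; rewrite /xD => ->.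
have E : \sum_(b < 2) \sum_(i < t)
           (Neq e k [set 1%g; (u * r ^+ i * s ^+ b)%g])%:Z
   = \sum_(phi : {ffun V -> 'I_k}) \sum_(b < 2) \sum_(i < t)
        (((stab e phi == [set 1%g; xD r u s b i]) : nat))%:Z.
  transitivity (\sum_(b < 2) \sum_(phi : {ffun V -> 'I_k}) \sum_(i < t)
        (((stab e phi == [set 1%g; xD r u s b i]) : nat))%:Z).
    apply: eq_bigr => b _; under eq_bigr => i _ do rewrite NeqE.
    by rewrite exchange_big.
  by rewrite exchange_big.
rewrite E LdistE sumNge.
under [X in _ = X - _]eq_bigr
  do rewrite (Db t0 rt u2 s2 uru crs cus injD hsubD hAutD).
by rewrite big_split /= addrK.
Qed.
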